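(* Let $T$ be a complete theory with monster model $\mathcal{U}$, $A\subseteq\mathcal{U}$ small, and $\nu\in\mathfrak{M}_y(\mathcal{U})$ smooth over $A$. Then for every $\mu\in\mathfrak{M}_x(\mathcal{U})$, $\mu\geq_{\mathbb{E},A}\nu$.
   Context: For $C\subseteq\mathcal{U}$, $\mathcal{L}_x(C)$ is the Boolean algebra of formulas in $x$ with parameters from $C$ modulo $T$, embedded in $\mathcal{L}_{xy}(C)$ via $\varphi(x)\mapsto\varphi(x)\wedge y=y$; $\mathfrak{M}_x(C)$ is the set of finitely additive probability measures on $\mathcal{L}_x(C)$. For $\omega\in\mathfrak{M}_{xy}(C)$, $\pi_x(\omega)(\varphi(x))=\omega(\varphi(x)\wedge y=y)$ (similarly $\pi_y$); $\omega|_D$ is restriction. $\mu\geq_{\mathbb{E},A}\nu$ means there is $\lambda\in\mathfrak{M}_{xy}(A)$ with $\pi_x(\lambda)=\mu|_A$ such that every $\omega\in\mathfrak{M}_{xy}(\mathcal{U})$ with $\omega|_A=\lambda$ and $\pi_x(\omega)=\mu$ satisfies $\pi_y(\omega)=\nu$. A global measure $\nu$ is smooth over $A$ if every $\nu'\in\mathfrak{M}_y(\mathcal{U})$ with $\nu'|_A=\nu|_A$ equals $\nu$. *)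

(* Defs.v *)
From Stdlib Require Import Reals List.
From Stdlib Require Fin.
Import ListNotations.
Open Scope R_scope.

Record signature := {
  Fsym : Type; Rsym : Type;
  farity : Fsym -> nat; rarity : Rsym -> nat }.

Record structure (L : signature) := {
  carrier :> Type;
  funs : forall f : Fsym L, (Fin.t (farity L f) -> carrier) -> carrier;
  rels : forall r : Rsym L, (Fin.t (rarity L r) -> carrier) -> Prop }.
Arguments funs {L} _ _ _.
Arguments rels {L} _ _ _.

(* Terms and formulas with variables indexed by nat and parameters
   (constants naming elements) from a type P. *)
Inductive term (L : signature) (P : Type) : Type :=
| tvar : nat -> term L P
| tpar : P -> term L P
| tapp : forall f : Fsym L, (Fin.t (farity L f) -> term L P) -> term L P.
Arguments tvar {L P}. Arguments tpar {L P}. Arguments tapp {L P}.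

Inductive formula (L : signature) (P : Type) : Type :=
| fEq  : term L P -> term L P -> formula L P
| fRel : forall r : Rsym L, (Fin.t (rarity L r) -> term L P) -> formula L P
| fNeg : formula L P -> formula L P
| fAnd : formula L P -> formula L P -> formula L P
| fEx  : nat -> formula L P -> formula L P.
Arguments fEq {L P}. Arguments fRel {L P}. Arguments fNeg {L P}.
Arguments fAnd {L P}. Arguments fEx {L P}.

Definition fOr {L P} (a b : formula L P) : formula L P :=
  fNeg (fAnd (fNeg a) (fNeg b)).
Definition fTop {L P} : formula L P := fEx 0 (fEq (tvar 0) (tvar 0)).

Definition fml {L} (M : structure L) := formula L (carrier L M).

Definition upd {U : Type} (s : nat -> U) (i : nat) (a : U) : nat -> U :=
  fun j => if Nat.eqb j i then a else s j.

Fixpoint eval {L} (M : structure L) (s : nat -> M) (t : term L M) : M :=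
  match t with
  | tvar i => s i
  | tpar a => a
  | tapp f args => funs M f (fun k => eval M s (args k))
  end.

Fixpoint sat {L} (M : structure L) (s : nat -> M) (p : fml M) : Prop :=
  match p with
  | fEq t1 t2 => eval M s t1 = eval M s t2
  | fRel r args => rels M r (fun k => eval M s (args k))
  | fNeg q => ~ sat M s q
  | fAnd q1 q2 => sat M s q1 /\ sat M s q2
  | fEx i q => exists a, sat M (upd s i a) q
  end.

Fixpoint tfree {L P} (i : nat) (t : term L P) : Prop :=
  match t with
  | tvar j => j = i
  | tpar _ => False
  | tapp f args => exists k, tfree i (args k)
  end.

Fixpoint ffree {L P} (i : nat) (p : formula L P) : Prop :=
  match p with
  | fEq t1 t2 => tfree i t1 \/ tfree i t2
  | fRel r args => exists k, tfree i (args k)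
  | fNeg q => ffree i q
  | fAnd q1 q2 => ffree i q1 \/ ffree i q2
  | fEx j q => j <> i /\ ffree i q
  end.

Fixpoint tparams_in {L P} (C : P -> Prop) (t : term L P) : Prop :=
  match t with
  | tvar _ => True
  | tpar a => C a
  | tapp f args => forall k, tparams_in C (args k)
  end.

Fixpoint fparams_in {L P} (C : P -> Prop) (p : formula L P) : Prop :=
  match p with
  | fEq t1 t2 => tparams_in C t1 /\ tparams_in C t2
  | fRel r args => forall k, tparams_in C (args k)
  | fNeg q => fparams_in C q
  | fAnd q1 q2 => fparams_in C q1 /\ fparams_in C q2
  | fEx _ q => fparams_in C q
  end.

(** * The monster model.
   T is the complete theory Th(M); "small" means of size < kappa, where kappa
   is the cardinality of the type K. *)
Definition card_lt (X Y : Type) : Prop :=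
  (exists f : X -> Y, forall a b, f a = f b -> a = b) /\
  ~ (exists g : Y -> X, forall a b, g a = g b -> a = b).

Definition small {L} (M : structure L) (K : Type) (B : M -> Prop) : Prop :=
  card_lt {a : M | B a} K.

Definition in_L {L} (M : structure L) (x : list nat) (C : M -> Prop)
  (p : fml M) : Prop :=
  (forall i, ffree i p -> In i x) /\ fparams_in C p.

Definition saturated {L} (M : structure L) (K : Type) : Prop :=
  forall B : M -> Prop, small M K B ->
  forall p : fml M -> Prop,
    (forall q, p q -> in_L M [0%nat] B q) ->
    (forall l : list (fml M), (forall q, In q l -> p q) ->
        exists s, forall q, In q l -> sat M s q) ->
    exists s, forall q, p q -> sat M s q.

Definition automorphism {L} (M : structure L) (sg : M -> M) : Prop :=
  (exists tau : M -> M, (forall a, tau (sg a) = a) /\ (forall a, sg (tau a) = a)) /\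
  (forall f args, sg (funs M f args) = funs M f (fun k => sg (args k))) /\
  (forall r args, rels M r args <-> rels M r (fun k => sg (args k))).

Definition elementary_on {L} (M : structure L) (B : M -> Prop) (f : M -> M) : Prop :=
  forall (p : fml M) (s : nat -> M),
    fparams_in (fun _ => False) p -> (forall i, B (s i)) ->
    (sat M s p <-> sat M (fun i => f (s i)) p).

Definition strongly_homogeneous {L} (M : structure L) (K : Type) : Prop :=
  forall (B : M -> Prop) (f : M -> M), small M K B -> elementary_on M B f ->
  exists sg, automorphism M sg /\ forall a, B a -> sg a = f a.

(* M is a monster model (kappa-saturated, strongly kappa-homogeneous,
   kappa > |T| = |L| + aleph_0) of its complete theory T = Th(M). *)
Definition monster {L} (M : structure L) (K : Type) : Prop :=
  inhabited (carrier L M) /\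
  card_lt nat K /\ card_lt (Fsym L) K /\ card_lt (Rsym L) K /\
  saturated M K /\ strongly_homogeneous M K.

(* mod-T equivalence of formulas with parameters = equivalence in M *)
Definition equivM {L} (M : structure L) (p q : fml M) : Prop :=
  forall s, sat M s p <-> sat M s q.

(* m : fml M -> R is (represents) an element of M_x(C): a finitely additive
   probability measure on L_x(C) (only values on L_x(C) matter). *)
Definition keisler {L} (M : structure L) (x : list nat) (C : M -> Prop)
  (m : fml M -> R) : Prop :=
  (forall p q, in_L M x C p -> in_L M x C q -> equivM M p q -> m p = m q) /\
  (forall p, in_L M x C p -> 0 <= m p) /\
  (forall p, in_L M x C p -> (forall s, sat M s p) -> m p = 1) /\
  (forall p q, in_L M x C p -> in_L M x C q ->
     (forall s, ~ (sat M s p /\ sat M s q)) -> m (fOr p q) = m p + m q).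

Definition meas_eq {L} (M : structure L) (x : list nat) (C : M -> Prop)
  (m1 m2 : fml M -> R) : Prop :=
  forall p, in_L M x C p -> m1 p = m2 p.

Definition fullset {U : Type} : U -> Prop := fun _ => True.

Definition vars_eq {L P} (y : list nat) : formula L P :=
  fold_right (fun j acc => fAnd (fEq (tvar j) (tvar j)) acc) fTop y.

Definition pi_x {L} {M : structure L} (y : list nat) (w : fml M -> R) : fml M -> R :=
  fun p => w (fAnd p (vars_eq y)).
Definition pi_y {L} {M : structure L} (x : list nat) (w : fml M -> R) : fml M -> R :=
  fun q => w (fAnd (vars_eq x) q).

Definition smooth_over {L} (M : structure L) (y : list nat) (A : M -> Prop)
  (nu : fml M -> R) : Prop :=
  forall nu', keisler M y fullset nu' -> meas_eq M y A nu' nu ->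
    meas_eq M y fullset nu' nu.

Definition geqEA {L} (M : structure L) (x y : list nat) (A : M -> Prop)
  (mu nu : fml M -> R) : Prop :=
  exists lam, keisler M (x ++ y) A lam /\ meas_eq M x A (pi_x y lam) mu /\
   forall w, keisler M (x ++ y) fullset w ->
     meas_eq M (x ++ y) A w lam -> meas_eq M x fullset (pi_x y w) mu ->
     meas_eq M y fullset (pi_y x w) nu.

(* Main.v *)
Require Import Defs.
From Stdlib Require Import Reals List.

Module Cpt.
From HB Require Import structures.
From mathcomp Require Import all_boot all_order all_algebra.
From mathcomp Require Import all_classical all_reals all_analysis.
From mathcomp Require Import Rstruct Rstruct_topology finmap.
Import numFieldNormedType.Exports.
Local Open Scope classical_set_scope.

Definition lin {X : Type} (f : X -> R) (cs : list (R * X)) : R :=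
  fold_right (fun p acc => Rplus (Rmult (fst p) (f (snd p))) acc) R0 cs.

Lemma in_In (T : eqType) (x : T) (s : seq T) : x \in s -> List.In x s.
Proof.
elim: s => [|y s IH] //=; rewrite inE => /orP [/eqP ->|/IH]; [left|right] => //.
Qed.

Lemma In_in (T : eqType) (x : T) (s : seq T) : List.In x s -> x \in s.
Proof.
elim: s => [|y s IH] //= [->|/IH]; rewrite inE.
  by rewrite eqxx.
by move=> ->; rewrite orbT.
Qed.

Import ArrowAsProduct.

Lemma lin_cont (X : Type) (cs : list (R * X)) : continuous (fun g : {classic X} -> R => lin g cs).
Proof.
elim: cs => [|[a x] cs IH] /=.
  exact: cst_continuous.
move=> g.
apply: (@continuousD _ R^o ({classic X} -> R) (fun g : ({classic X} -> R) => Rmult a (g x)) (fun g => lin g cs)); last exact: IH.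
apply: (@continuousM _ ({classic X} -> R) (fun _ => a) (fun g : ({classic X} -> R) => g x)).
  exact: cst_continuous.
exact: (@proj_continuous {classic X} (fun _ => R) x).
Qed.

Lemma box_fip (X : Type) (D : (list (R * X) * R) -> Prop) :
  (forall l, (forall c, List.In c l -> D c) ->
     exists f : X -> R, (forall x, Rle 0 (f x) /\ Rle (f x) 1) /\
        forall c, List.In c l -> lin f (fst c) = snd c) ->
  exists f : X -> R, (forall x, Rle 0 (f x) /\ Rle (f x) 1) /\
        forall c, D c -> lin f (fst c) = snd c.
Proof.
move=> H.
pose Box := [set f : ({classic X} -> R) | forall i, `[(0:R), (1:R)]%classic (f i)].
have cB : compact Box.
  exact: (@tychonoff {classic X} (fun _ => R) (fun _ => `[(0:R), (1:R)]%classic) (fun _ => @segment_compact R 0 1)).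
pose J := {classic (list (R * X) * R)}.
pose F := fun c : J => Box `&` [set g : ({classic X} -> R) | lin g (fst c) = snd c].
case: (pselect (exists c, D c)) => [[c0 Dc0]|nD]; last first.
  exists (fun _ => R0); split; first by move=> _; split; apply: Rle_refl || apply: Rle_0_1.
  by move=> c Dc; exfalso; apply: nD; exists c.
have finIf : finI (D : set J) F.
  move=> D' sD'.
  have Dl : forall c, List.In c (enum_fset D') -> D c.
    move=> c /In_in /sD'; by rewrite in_setE.
  have [f [fB fl]] := H (enum_fset D') Dl.
  exists f => c /= cD'; split.
    move=> i /=; rewrite in_itv /=; have [f0 f1] := fB i.
    by apply/andP; split; apply/RleP.
  by apply: fl; exact: (@in_In _ c (enum_fset D') cD').
have PG := finI_filter finIf.
have [|p [Bp clp]] := cB _ PG.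
  exists (F c0); last by move=> g [].
  exact: finI_from1.
exists p; split; first by move=> i; have := Bp i; rewrite /= in_itv /= => /andP [/RleP ? /RleP ?].
move=> c Dc.
have GF : filter_from (finI_from (D : set J) F) id (F c) by exists (F c) => //; exact: finI_from1.
have : closed [set g : ({classic X} -> R) | lin g (fst c) = snd c].
  apply: (preimage_closed (f := fun g : ({classic X} -> R) => lin g (fst c)) (D := [set snd c])).
    by move=> g _; apply: lin_cont.
  exact: closed_eq.
apply => B nB.
have [q [[_ q1] q2]] := clp _ _ GF nB.
by exists q.
Qed.
End Cpt.

From Stdlib Require Import Lra Classical ClassicalEpsilon FunctionalExtensionality.
Import ListNotations.
Open Scope R_scope.

Definition lin {X : Type} := @Cpt.lin X.
Definition box_fip := Cpt.box_fip.
Lemma eval_coinc {L} (M : structure L) (t : term L M) (s s' : nat -> M) :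
  (forall i, tfree i t -> s i = s' i) -> eval M s t = eval M s' t.
Proof.
  induction t as [i|a|f args IH]; simpl; intros H.
  - apply H. reflexivity.
  - reflexivity.
  - f_equal. apply functional_extensionality. intros k.
    apply IH. intros i Hi. apply H. exists k. exact Hi.
Qed.

Lemma sat_coinc {L} (M : structure L) (p : fml M) : forall (s s' : nat -> M),
  (forall i, ffree i p -> s i = s' i) -> (sat M s p <-> sat M s' p).
Proof.
  induction p as [t1 t2|r args|q IH|q1 IH1 q2 IH2|j q IH]; simpl; intros s s' H.
  - rewrite (eval_coinc M t1 s s'), (eval_coinc M t2 s s'); [tauto| |];
      intros i Hi; apply H; auto.
  - replace (fun k => eval M s (args k)) with (fun k => eval M s' (args k)); [tauto|].
    apply functional_extensionality. intros k. symmetry. apply eval_coinc.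
    intros i Hi. apply H. exists k. exact Hi.
  - rewrite (IH s s' H). tauto.
  - rewrite (IH1 s s'), (IH2 s s'); [tauto| |]; intros i Hi; apply H; auto.
  - split; intros [a Ha]; exists a.
    + apply (IH (upd s j a) (upd s' j a)); [|exact Ha].
      intros i Hi. unfold upd. destruct (Nat.eqb_spec i j); [reflexivity|].
      apply H. split; [congruence|exact Hi].
    + apply (IH (upd s j a) (upd s' j a)); [|exact Ha].
      intros i Hi. unfold upd. destruct (Nat.eqb_spec i j); [reflexivity|].
      apply H. split; [congruence|exact Hi].
Qed.

Lemma sat_fOr {L} (M : structure L) s (p q : fml M) :
  sat M s (fOr p q) <-> sat M s p \/ sat M s q.
Proof. unfold fOr; simpl. tauto. Qed.

Lemma sat_fTop {L} (M : structure L) (s : nat -> M) : sat M s (@fTop L M).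
Proof. simpl. exists (s 0%nat). reflexivity. Qed.

Lemma sat_vars_eq {L} (M : structure L) s y : sat M s (@vars_eq L M y).
Proof. induction y; simpl. - apply (sat_fTop M s). - split; auto. Qed.

Lemma tparams_mono {L P} (C C' : P -> Prop) (t : term L P) :
  (forall a, C a -> C' a) -> tparams_in C t -> tparams_in C' t.
Proof. induction t; simpl; auto. Qed.

Lemma fparams_mono {L P} (C C' : P -> Prop) (p : formula L P) :
  (forall a, C a -> C' a) -> fparams_in C p -> fparams_in C' p.
Proof.
  induction p; simpl; intros HC H; try tauto.
  - split; eapply tparams_mono; eauto; tauto.
  - intros k; eapply tparams_mono; eauto.
Qed.

Lemma in_L_mono {L} (M : structure L) z z' C C' p :
  (forall i, In i z -> In i z') -> (forall a, C a -> C' a) ->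
  in_L M z C p -> in_L M z' C' p.
Proof.
  intros Hz HC [H1 H2]. split; [auto|]. eapply fparams_mono; eauto.
Qed.

Lemma in_L_and {L} (M : structure L) z C p q :
  in_L M z C p -> in_L M z C q -> in_L M z C (fAnd p q).
Proof.
  intros [H1 H2] [H3 H4]; split; simpl; [intros i [Hi|Hi]; auto|tauto].
Qed.

Lemma in_L_neg {L} (M : structure L) z C p :
  in_L M z C p -> in_L M z C (fNeg p).
Proof. intros [H1 H2]; split; simpl; auto. Qed.

Lemma in_L_or {L} (M : structure L) z C p q :
  in_L M z C p -> in_L M z C q -> in_L M z C (fOr p q).
Proof. intros; unfold fOr; auto using in_L_and, in_L_neg. Qed.

Lemma in_L_top {L} (M : structure L) z C : in_L M z C fTop.
Proof.
  split; simpl.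
  - intros i [H1 [H2|H2]]; congruence.
  - tauto.
Qed.

Lemma in_L_vars_eq {L} (M : structure L) y C : in_L M y C (vars_eq y).
Proof.
  induction y as [|j y IH]; simpl.
  - apply in_L_top.
  - destruct IH as [H1 H2]. split; simpl.
    + intros i [[H|H]|H]; subst; auto.
    + tauto.
Qed.

Lemma k_unsat {L} (M : structure L) z C m p :
  keisler M z C m -> in_L M z C p -> (forall s, ~ sat M s p) -> m p = 0.
Proof.
  intros [Keq [Kpos [Kone Kadd]]] Hp Hu.
  assert (H1 : m (fOr fTop p) = m fTop + m p).
  { apply Kadd; auto using in_L_top. intros s [_ H]. exact (Hu s H). }
  rewrite (Kone (fOr fTop p)), (Kone fTop) in H1; auto using in_L_top, in_L_or.
  - lra.
  - intros; apply sat_fTop.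
  - intros s; apply sat_fOr; left; apply sat_fTop.
Qed.

Lemma k_split {L} (M : structure L) z C m d a :
  keisler M z C m -> in_L M z C d -> in_L M z C a ->
  m d = m (fAnd d a) + m (fAnd d (fNeg a)).
Proof.
  intros [Keq [Kpos [Kone Kadd]]] Hd Ha.
  rewrite <- Kadd; auto using in_L_and, in_L_neg.
  - apply Keq; auto using in_L_and, in_L_neg, in_L_or.
    intros s. rewrite sat_fOr. simpl. tauto.
  - intros s. simpl. tauto.
Qed.

Definition sumf {A : Type} (F : A -> R) (l : list A) : R :=
  fold_right (fun a acc => F a + acc) 0 l.

Lemma sumf_ext {A} (F G : A -> R) l :
  (forall a, In a l -> F a = G a) -> sumf F l = sumf G l.
Proof.
  induction l; simpl; intros H; auto.
  rewrite H, IHl; auto.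
Qed.

Lemma sumf_app {A} (F : A -> R) l1 l2 : sumf F (l1 ++ l2) = sumf F l1 + sumf F l2.
Proof. induction l1; simpl; [lra|rewrite IHl1; lra]. Qed.

Lemma sumf_flat_map {A B} (F : B -> R) (g : A -> list B) l :
  sumf F (flat_map g l) = sumf (fun a => sumf F (g a)) l.
Proof. induction l; simpl; auto. rewrite sumf_app, IHl. reflexivity. Qed.

Lemma sumf_map {A B} (F : B -> R) (g : A -> B) l :
  sumf F (map g l) = sumf (fun a => F (g a)) l.
Proof. induction l; simpl; auto. rewrite IHl. reflexivity. Qed.

Lemma sumf_scale {A} (F : A -> R) c l : c * sumf F l = sumf (fun a => c * F a) l.
Proof. induction l; simpl; [lra|rewrite <- IHl; lra]. Qed.

Lemma sumf_plus {A} (F G : A -> R) l : sumf (fun a => F a + G a) l = sumf F l + sumf G l.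
Proof. induction l; simpl; [lra|rewrite IHl; lra]. Qed.

Lemma sumf_nonneg {A} (F : A -> R) l : (forall a, In a l -> 0 <= F a) -> 0 <= sumf F l.
Proof.
  induction l; simpl; intros H; [lra|].
  pose proof (H a (or_introl eq_refl)). pose proof (IHl (fun b Hb => H b (or_intror Hb))). lra.
Qed.

Lemma sumf_le {A} (F G : A -> R) l : (forall a, In a l -> F a <= G a) -> sumf F l <= sumf G l.
Proof.
  induction l; simpl; intros H; [lra|].
  pose proof (H a (or_introl eq_refl)). pose proof (IHl (fun b Hb => H b (or_intror Hb))). lra.
Qed.

Definition ind {L} {M : structure L} (s : nat -> M) (p : fml M) : R :=
  if excluded_middle_informative (sat M s p) then 1 else 0.

Lemma ind_ext {L} (M : structure L) s (p q : fml M) :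
  (sat M s p <-> sat M s q) -> ind s p = ind s q.
Proof.
  unfold ind; intros H.
  destruct (excluded_middle_informative (sat M s p));
  destruct (excluded_middle_informative (sat M s q)); tauto.
Qed.

Lemma ind_bounds {L} (M : structure L) s (p : fml M) : 0 <= ind s p <= 1.
Proof. unfold ind. destruct (excluded_middle_informative _); lra. Qed.

Lemma ind_true {L} (M : structure L) s (p : fml M) : sat M s p -> ind s p = 1.
Proof. unfold ind. destruct (excluded_middle_informative _); tauto. Qed.

Lemma ind_false {L} (M : structure L) s (p : fml M) : ~ sat M s p -> ind s p = 0.
Proof. unfold ind. destruct (excluded_middle_informative _); tauto. Qed.

Lemma ind_or {L} (M : structure L) s (p q : fml M) :
  ~ (sat M s p /\ sat M s q) -> ind s (fOr p q) = ind s p + ind s q.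
Proof.
  intros H. unfold ind.
  destruct (excluded_middle_informative (sat M s (fOr p q))) as [H1|H1];
  rewrite sat_fOr in H1;
  destruct (excluded_middle_informative (sat M s p));
  destruct (excluded_middle_informative (sat M s q)); try tauto; lra.
Qed.

Definition mix {L} {M : structure L} (dl : list (R * (nat -> M))) (p : fml M) : R :=
  sumf (fun ws => fst ws * ind (snd ws) p) dl.
Definition sumw {L} {M : structure L} (dl : list (R * (nat -> M))) : R := sumf fst dl.
Definition nonneg {L} {M : structure L} (dl : list (R * (nat -> M))) : Prop :=
  forall ws, In ws dl -> 0 <= fst ws.

Lemma mix_keisler {L} (M : structure L) z C dl :
  nonneg dl -> sumw dl = 1 -> keisler M z C (@mix L M dl).
Proof.
  intros Hn Hs. split; [|split; [|split]].
  - intros p q _ _ He. apply sumf_ext. intros ws _. rewrite (ind_ext M _ p q); auto.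
  - intros p _. apply sumf_nonneg. intros ws Hws.
    pose proof (Hn ws Hws). pose proof (ind_bounds M (snd ws) p). nra.
  - intros p _ Hv. rewrite <- Hs. apply sumf_ext. intros ws _. rewrite ind_true; auto. lra.
  - intros p q _ _ Hd. unfold mix. rewrite <- sumf_plus. apply sumf_ext. intros ws _.
    rewrite ind_or; auto. lra.
Qed.

Lemma mix_bounds {L} (M : structure L) dl (p : fml M) :
  nonneg dl -> sumw dl = 1 -> 0 <= mix dl p <= 1.
Proof.
  intros Hn Hs. split.
  - apply sumf_nonneg. intros ws Hws.
    pose proof (Hn ws Hws). pose proof (ind_bounds M (snd ws) p). nra.
  - rewrite <- Hs. apply sumf_le. intros ws Hws.
    pose proof (Hn ws Hws). pose proof (ind_bounds M (snd ws) p). nra.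
Qed.

Definition decided {L} {M : structure L} (g a : fml M) : Prop :=
  (forall s, sat M s g -> sat M s a) \/ (forall s, sat M s g -> ~ sat M s a).

Lemma part {L} (M : structure L) z C m :
  keisler M z C m -> forall l, (forall a, In a l -> in_L M z C a) ->
  exists P, (forall g, In g P -> in_L M z C g) /\
    (forall d, in_L M z C d -> m d = sumf (fun g => m (fAnd d g)) P) /\
    (forall a g, In a l -> In g P -> decided g a).
Proof.
  intros HK. pose proof HK as [Keq [Kpos [Kone Kadd]]].
  induction l as [|a l IH]; intros Hl.
  - exists [fTop]. split; [|split].
    + intros g [<-|[]]. apply in_L_top.
    + intros d Hd. simpl. rewrite Rplus_0_r. apply Keq; auto using in_L_and, in_L_top.
      intros s. simpl. pose proof (sat_fTop M s). tauto.
    + intros a g [].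
  - destruct IH as [P [HP1 [HP2 HP3]]]; [intros; apply Hl; simpl; auto|].
    assert (Ha : in_L M z C a) by (apply Hl; simpl; auto).
    exists (flat_map (fun g => [fAnd g a; fAnd g (fNeg a)]) P). split; [|split].
    + intros g' Hg'. apply in_flat_map in Hg'. destruct Hg' as [g [Hg Hg']].
      simpl in Hg'. destruct Hg' as [<-|[<-|[]]]; auto using in_L_and, in_L_neg.
    + intros d Hd. rewrite sumf_flat_map, HP2; auto. apply sumf_ext. intros g Hg.
      simpl. rewrite Rplus_0_r.
      rewrite <- Kadd; auto using in_L_and, in_L_neg.
      * apply Keq; auto using in_L_and, in_L_neg, in_L_or.
        intros s. rewrite sat_fOr. simpl. tauto.
      * intros s. simpl. tauto.
    + intros a' g' Ha' Hg'. apply in_flat_map in Hg'. destruct Hg' as [g [Hg Hg']].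
      simpl in Ha'. destruct Ha' as [<-|Ha'].
      * simpl in Hg'. destruct Hg' as [<-|[<-|[]]]; [left|right]; intros s; simpl; tauto.
      * destruct (HP3 a' g Ha' Hg) as [H|H]; simpl in Hg';
        destruct Hg' as [<-|[<-|[]]]; [left|left|right|right]; intros s; simpl;
        intros Hs; apply H; tauto.
Qed.

Lemma pts {L} (M : structure L) z C m :
  keisler M z C m -> forall P, (forall g, In g P -> in_L M z C g) ->
  exists dl : list (R * (nat -> M)), nonneg dl /\ sumw dl = sumf m P /\
    forall a, in_L M z C a -> (forall g, In g P -> decided g a) ->
      mix dl a = sumf (fun g => m (fAnd a g)) P.
Proof.
  intros HK. pose proof HK as [Keq [Kpos [Kone Kadd]]].
  induction P as [|g P IH]; intros HP.
  - exists []. split; [intros ws []|split; [reflexivity|]]. intros; reflexivity.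
  - destruct IH as [dl [Hn [Hs Hm]]]; [intros; apply HP; simpl; auto|].
    assert (Hg : in_L M z C g) by (apply HP; simpl; auto).
    destruct (classic (exists s, sat M s g)) as [[s Hsg]|Hno].
    + exists ((m g, s) :: dl). split; [|split].
      * intros ws [<-|Hws]; simpl; auto.
      * unfold sumw in *. simpl. rewrite Hs. reflexivity.
      * intros a Ha Hd. unfold mix in *. simpl. rewrite Hm; auto.
        2: { intros; apply Hd; simpl; auto. }
        f_equal.
        destruct (Hd g (or_introl eq_refl)) as [H|H].
        -- rewrite ind_true; auto. rewrite Rmult_1_r. apply Keq; auto using in_L_and.
           intros s'. simpl. pose proof (H s'). tauto.
        -- rewrite ind_false; auto. rewrite Rmult_0_r. symmetry.
           apply (k_unsat M z C); auto using in_L_and. intros s' [H1 H2]. exact (H s' H2 H1).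
    + exists dl. split; [auto|split].
      * simpl. rewrite (k_unsat M z C m g); auto. rewrite Hs. ring.
        intros s Hs'. apply Hno. exists s. exact Hs'.
      * intros a Ha Hd. simpl. rewrite Hm; auto.
        2: { intros; apply Hd; simpl; auto. }
        rewrite (k_unsat M z C m (fAnd a g)); auto using in_L_and. ring.
        intros s [_ Hs']. apply Hno. exists s. exact Hs'.
Qed.

Lemma discr {L} (M : structure L) z C m :
  keisler M z C m -> forall l, (forall a, In a l -> in_L M z C a) ->
  exists dl : list (R * (nat -> M)), nonneg dl /\ sumw dl = 1 /\
    forall a, In a l -> mix dl a = m a.
Proof.
  intros HK l Hl. pose proof HK as [Keq [Kpos [Kone Kadd]]].
  destruct (part M z C m HK l Hl) as [P [HP1 [HP2 HP3]]].
  destruct (pts M z C m HK P HP1) as [dl [Hn [Hs Hm]]].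
  exists dl. split; [auto|split].
  - rewrite Hs. rewrite <- (Kone fTop); [|apply in_L_top|intros; apply sat_fTop].
    rewrite (HP2 fTop); [|apply in_L_top]. apply sumf_ext. intros g Hg.
    apply Keq; auto using in_L_and, in_L_top. intros s. simpl. pose proof (sat_fTop M s). tauto.
  - intros a Ha. rewrite Hm; auto. symmetry. apply HP2; auto.
Qed.

Definition glue {U : Type} (x : list nat) (s t : nat -> U) : nat -> U :=
  fun i => if in_dec Nat.eq_dec i x then s i else t i.

Definition prodl {L} {M : structure L} (x : list nat) (dl1 dl2 : list (R * (nat -> M))) :=
  flat_map (fun ws => map (fun vt => (fst ws * fst vt, glue x (snd ws) (snd vt))) dl2) dl1.

Lemma prodl_nonneg {L} (M : structure L) x (dl1 dl2 : list (R * (nat -> M))) :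
  nonneg dl1 -> nonneg dl2 -> nonneg (prodl x dl1 dl2).
Proof.
  intros H1 H2 ws Hws. unfold prodl in Hws. apply in_flat_map in Hws.
  destruct Hws as [a [Ha Hws]]. apply in_map_iff in Hws. destruct Hws as [b [<- Hb]].
  simpl. pose proof (H1 a Ha). pose proof (H2 b Hb). nra.
Qed.

Lemma prodl_mix {L} (M : structure L) x (dl1 dl2 : list (R * (nat -> M))) p :
  mix (prodl x dl1 dl2) p =
  sumf (fun ws => fst ws * sumf (fun vt => fst vt * ind (glue x (snd ws) (snd vt)) p) dl2) dl1.
Proof.
  unfold mix, prodl. rewrite sumf_flat_map. apply sumf_ext. intros ws _.
  rewrite sumf_map, sumf_scale. apply sumf_ext. intros vt _. simpl. ring.
Qed.

Lemma prodl_sumw {L} (M : structure L) x (dl1 dl2 : list (R * (nat -> M))) :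
  sumw dl1 = 1 -> sumw dl2 = 1 -> sumw (prodl x dl1 dl2) = 1.
Proof.
  intros H1 H2. unfold sumw, prodl in *. rewrite sumf_flat_map.
  rewrite <- H1. apply sumf_ext. intros ws _. rewrite sumf_map.
  transitivity (fst ws * sumf fst dl2); [|rewrite H2; ring].
  rewrite sumf_scale. reflexivity.
Qed.

Lemma ind_eq2 {L} (M : structure L) s s' (p q : fml M) :
  (sat M s p <-> sat M s' q) -> ind s p = ind s' q.
Proof.
  unfold ind; intros H.
  destruct (excluded_middle_informative (sat M s p));
  destruct (excluded_middle_informative (sat M s' q)); tauto.
Qed.

Lemma prodl_x {L} (M : structure L) x y (dl1 dl2 : list (R * (nat -> M))) a :
  sumw dl2 = 1 -> (forall i, ffree i a -> In i x) ->
  mix (prodl x dl1 dl2) (fAnd a (vars_eq y)) = mix dl1 a.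
Proof.
  intros H2 Ha. rewrite prodl_mix. unfold mix. apply sumf_ext. intros ws _.
  transitivity (fst ws * ind (snd ws) a * sumw dl2); [|rewrite H2; ring].
  unfold sumw. rewrite Rmult_assoc, sumf_scale, sumf_scale, sumf_scale. apply sumf_ext. intros vt _.
  rewrite (ind_eq2 M _ (snd ws) _ a). ring.
  simpl. pose proof (sat_vars_eq M (glue x (snd ws) (snd vt)) y).
  rewrite (sat_coinc M a (glue x (snd ws) (snd vt)) (snd ws)). tauto.
  intros i Hi. unfold glue. destruct (in_dec Nat.eq_dec i x); [reflexivity|].
  exfalso; auto.
Qed.

Lemma prodl_y {L} (M : structure L) x y (dl1 dl2 : list (R * (nat -> M))) b :
  sumw dl1 = 1 -> (forall i, In i x -> ~ In i y) -> (forall i, ffree i b -> In i y) ->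
  mix (prodl x dl1 dl2) (fAnd (vars_eq x) b) = mix dl2 b.
Proof.
  intros H1 Hxy Hb. rewrite prodl_mix.
  rewrite <- (Rmult_1_l (mix dl2 b)), <- H1. unfold sumw. rewrite Rmult_comm, sumf_scale.
  apply sumf_ext. intros ws _. rewrite Rmult_comm. f_equal. unfold mix.
  apply sumf_ext. intros vt _. f_equal. apply ind_eq2.
  simpl. pose proof (sat_vars_eq M (glue x (snd ws) (snd vt)) x).
  rewrite (sat_coinc M b (glue x (snd ws) (snd vt)) (snd vt)). tauto.
  intros i Hi. unfold glue. destruct (in_dec Nat.eq_dec i x); [|reflexivity].
  exfalso; eapply Hxy; eauto.
Qed.

Definition admissible {L} (M : structure L) (x y : list nat) (A : M -> Prop)
  (mu nu : fml M -> R) (c : list (R * fml M) * R) : Prop :=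
  (exists p q, in_L M (x ++ y) A p /\ in_L M (x ++ y) A q /\ equivM M p q /\
     c = ([(1, p); (-1, q)], 0)) \/
  (exists p, in_L M (x ++ y) A p /\ (forall s, sat M s p) /\ c = ([(1, p)], 1)) \/
  (exists p q, in_L M (x ++ y) A p /\ in_L M (x ++ y) A q /\
     (forall s, ~ (sat M s p /\ sat M s q)) /\
     c = ([(1, fOr p q); (-1, p); (-1, q)], 0)) \/
  (exists a, in_L M x A a /\ c = ([(1, fAnd a (vars_eq y))], mu a)) \/
  (exists b, in_L M y A b /\ c = ([(1, fAnd (vars_eq x) b)], nu b)).

Lemma fip_lists {L} (M : structure L) x y A mu nu :
  forall l, (forall c, In c l -> admissible M x y A mu nu c) ->
  exists la lb, (forall a, In a la -> in_L M x A a) /\ (forall b, In b lb -> in_L M y A b) /\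
   forall dl : list (R * (nat -> M)), nonneg dl -> sumw dl = 1 ->
     (forall a, In a la -> mix dl (fAnd a (vars_eq y)) = mu a) ->
     (forall b, In b lb -> mix dl (fAnd (vars_eq x) b) = nu b) ->
     forall c, In c l -> lin (mix dl) (fst c) = snd c.
Proof.
  induction l as [|c l IH]; intros Hl.
  - exists [], []. split; [intros _ []|split; [intros _ []|]]. intros _ _ _ _ _ _ [].
  - destruct IH as [la [lb [Ha [Hb H]]]]; [intros; apply Hl; simpl; auto|].
    destruct (Hl c (or_introl eq_refl)) as
      [[p [q [Hp [Hq [He ->]]]]]|[[p [Hp [Hv ->]]]|[[p [q [Hp [Hq [Hd ->]]]]]|
       [[a [Ha' ->]]|[b [Hb' ->]]]]]].
    + exists la, lb. split; [auto|split; [auto|]].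
      intros dl Hn Hs H1 H2 c' [<-|Hc']; [|apply H; auto].
      pose proof (mix_keisler M (x ++ y) A dl Hn Hs) as [Keq _].
      unfold lin; simpl. rewrite (Keq p q); auto. ring.
    + exists la, lb. split; [auto|split; [auto|]].
      intros dl Hn Hs H1 H2 c' [<-|Hc']; [|apply H; auto].
      pose proof (mix_keisler M (x ++ y) A dl Hn Hs) as [_ [_ [Kone _]]].
      unfold lin; simpl. rewrite (Kone p); auto. ring.
    + exists la, lb. split; [auto|split; [auto|]].
      intros dl Hn Hs H1 H2 c' [<-|Hc']; [|apply H; auto].
      pose proof (mix_keisler M (x ++ y) A dl Hn Hs) as [_ [_ [_ Kadd]]].
      unfold lin; simpl. rewrite (Kadd p q); auto. ring.
    + exists (a :: la), lb. split; [intros a0 [<-|Ha0]; auto|split; [auto|]].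
      intros dl Hn Hs H1 H2 c' [<-|Hc']; [|apply H; auto; intros; apply H1; simpl; auto].
      unfold lin; simpl. rewrite H1; simpl; auto. ring.
    + exists la, (b :: lb). split; [auto|split; [intros b0 [<-|Hb0]; auto|]].
      intros dl Hn Hs H1 H2 c' [<-|Hc']; [|apply H; auto; intros; apply H2; simpl; auto].
      unfold lin; simpl. rewrite H2; simpl; auto. ring.
Qed.

Lemma in_L_xy {L} (M : structure L) x y C a :
  in_L M x C a -> in_L M (x ++ y) C (fAnd a (vars_eq y)).
Proof.
  intros Ha. apply in_L_and.
  - apply (in_L_mono M x (x ++ y) C C a); auto. intros i Hi; apply in_or_app; auto.
  - apply (in_L_mono M y (x ++ y) C C); auto using in_L_vars_eq. intros i Hi; apply in_or_app; auto.
Qed.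

Lemma in_L_yx {L} (M : structure L) x y C b :
  in_L M y C b -> in_L M (x ++ y) C (fAnd (vars_eq x) b).
Proof.
  intros Hb. apply in_L_and.
  - apply (in_L_mono M x (x ++ y) C C); auto using in_L_vars_eq. intros i Hi; apply in_or_app; auto.
  - apply (in_L_mono M y (x ++ y) C C b); auto. intros i Hi; apply in_or_app; auto.
Qed.

Theorem proposition4p6 (L : signature) (M : structure L) (K : Type)
  (HM : monster M K) (A : M -> Prop) (HA : small M K A)
  (x y : list nat) (Hxy : forall i, In i x -> ~ In i y)
  (nu : fml M -> R) (Hnu : keisler M y fullset nu) (Hsm : smooth_over M y A nu)
  (mu : fml M -> R) (Hmu : keisler M x fullset mu) :
  geqEA M x y A mu nu.
Proof.
  destruct (box_fip (fml M) (admissible M x y A mu nu)) as [lam [Hbox Hlam]].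
  { intros l Hl. destruct (fip_lists M x y A mu nu l Hl) as [la [lb [Ha [Hb H]]]].
    destruct (discr M x fullset mu Hmu la) as [dl1 [Hn1 [Hs1 Hm1]]].
    { intros a Ha0. eapply in_L_mono; [| |apply Ha; exact Ha0]; auto. intros; exact I. }
    destruct (discr M y fullset nu Hnu lb) as [dl2 [Hn2 [Hs2 Hm2]]].
    { intros b Hb0. eapply in_L_mono; [| |apply Hb; exact Hb0]; auto. intros; exact I. }
    exists (mix (prodl x dl1 dl2)). split.
    - intros p. apply mix_bounds; auto using prodl_nonneg, prodl_sumw.
    - apply H; auto using prodl_nonneg, prodl_sumw.
      + intros a Ha0. rewrite (prodl_x M x y); auto. apply (Ha a Ha0).
      + intros b Hb0. rewrite (prodl_y M x y); auto. apply (Hb b Hb0). }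
  exists lam. split; [|split].
  - split; [|split; [|split]].
    + intros p q Hp Hq He.
      assert (H := Hlam ([(1, p); (-1, q)], 0)). unfold lin in H; simpl in H.
      assert (H' : lam p * 1 + (-1 * lam q) = 0).
      { rewrite <- H; [ring|]. left. exists p, q. auto. }
      lra.
    + intros p _. apply Hbox.
    + intros p Hp Hv.
      assert (H := Hlam ([(1, p)], 1)). unfold lin in H; simpl in H.
      rewrite <- H; [ring|]. right; left. exists p. auto.
    + intros p q Hp Hq Hd.
      assert (H := Hlam ([(1, fOr p q); (-1, p); (-1, q)], 0)). unfold lin in H; simpl in H.
      assert (H' : 1 * lam (fOr p q) + (-1 * lam p + (-1 * lam q + 0)) = 0).
      { apply H. right; right; left. exists p, q. auto. }
      lra.
  - intros a Ha. unfold pi_x.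
    assert (H := Hlam ([(1, fAnd a (vars_eq y))], mu a)). unfold lin in H; simpl in H.
    rewrite <- H; [ring|]. right; right; right; left. exists a. auto.
  - intros w Hw Hwl _. apply Hsm.
    + destruct Hw as [Keq [Kpos [Kone Kadd]]].
      assert (Hf : forall b, in_L M y fullset b -> in_L M (x ++ y) fullset (fAnd (vars_eq x) b))
        by (intros; apply in_L_yx; auto).
      split; [|split; [|split]]; unfold pi_y.
      * intros p q Hp Hq He. apply Keq; auto. intros s. simpl. rewrite (He s). tauto.
      * intros p Hp. apply Kpos; auto.
      * intros p Hp Hv. apply Kone; auto. intros s. split; [apply sat_vars_eq|auto].
      * intros p q Hp Hq Hd. rewrite <- Kadd; auto.
        -- apply Keq; auto using in_L_or. intros s.
           change (sat M s (fAnd (vars_eq x) (fOr p q))) with (sat M s (vars_eq x) /\ sat M s (fOr p q)).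
           rewrite sat_fOr, sat_fOr. simpl. tauto.
        -- intros s. simpl. specialize (Hd s). tauto.
    + intros b Hb. unfold pi_y. rewrite Hwl; [|apply in_L_yx; auto].
      assert (H := Hlam ([(1, fAnd (vars_eq x) b)], nu b)). unfold lin in H; simpl in H.
      rewrite <- H; [ring|]. right; right; right; right. exists b. auto.
Qed.
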